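(* Let $n\geq2$ and $N_n=\langle a\mid a^n=0\rangle$. (i) The identities satisfied by $N_n$ are axiomatized by $xy\approx yx$, $x^n\approx y_1y_2\cdots y_n$, and all identities $x_1^{e_1}x_2^{e_2}\cdots x_m^{e_m}\approx x_1^{f_1}x_2^{f_2}\cdots x_m^{f_m}$ with $m\geq1$, $e_1,\dots,e_m,f_1,\dots,f_m\geq1$ such that (a) $e=f<n$ where $e=\sum_{i=1}^me_i$ and $f=\sum_{i=1}^mf_i$, and (b) for each $k\in\{1,\dots,m\}$, either $e_k=f_k$ or $e+e_k,f+f_k\geq n$. (ii) The subpseudovariety of $\llbracket N_n\rrbracket$ defined by the identity $x^n\approx x^{n-1}$ is the unique maximal subpseudovariety of $\llbracket N_n\rrbracket$.
   Context: $N_n=\{0,a,\dots,a^{n-1}\}$ is the monogenic nilpotent semigroup of order $n$. Identities are between words over a countably infinite alphabet of variables with distinct letters $x,y,x_i,y_i$. A pseudovariety is a class of finite semigroups closed under finite direct products, subsemigroups and homomorphic images; $\llbracket S\rrbracket$ is the pseudovariety generated by $S$; a maximal subpseudovariety is a maximal proper subpseudovariety. *)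

(* Defs.v *)
From mathcomp Require Import all_boot.
From mathcomp Require Import zify.
Set Implicit Arguments. Unset Strict Implicit. Unset Printing Implicit Defensive.

Record semigroup := Semigroup {
  sg_car :> Type;
  sg_mul : sg_car -> sg_car -> sg_car;
  sg_mulA : associative sg_mul }.

Record finSemigroup := FinSemigroup {
  fsg_car :> finType;
  fsg_mul : fsg_car -> fsg_car -> fsg_car;
  fsg_mulA : associative fsg_mul;
  fsg_nonempty : 0 < #|fsg_car| }.

Definition sg_of_fsg (S : finSemigroup) : semigroup := Semigroup (@fsg_mulA S).

(** * Words and identities.
    Variables are natural numbers (a countably infinite alphabet).
    A (nonempty) word is a first letter followed by a sequence of letters. *)
Definition word := (nat * seq nat)%type.
Definition identity := (word * word)%type.

Definition eval_word (S : semigroup) (s : nat -> S) (w : word) : S :=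
  foldl (fun acc y => sg_mul acc (s y)) (s w.1) w.2.

Definition sat (S : semigroup) (I : identity) : Prop :=
  forall s : nat -> S, eval_word s I.1 = eval_word s I.2.

Definition fsat (S : finSemigroup) (I : identity) : Prop := sat (sg_of_fsg S) I.

Definition consequence (Sigma : identity -> Prop) (I : identity) : Prop :=
  forall S : semigroup, (forall J, Sigma J -> sat S J) -> sat S I.

Definition word_of_seq (s : seq nat) : word := (head 0 s, behead s).

(** x_1^{e_1} ... x_m^{e_m} with x_i the variable i-1 *)
Definition pow_word (es : seq nat) : word :=
  word_of_seq (flatten (mkseq (fun i => nseq (nth 0 es i) i) (size es))).

(** Concrete model: carrier 'I_n (for n >= 1), where 0 is the zero and
    i >= 1 stands for a^i.  (We use n.-1.+1 so that the carrier is
    nonempty for every n; for n >= 1 this is just n.) *)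
Definition Nmul_nat (n i j : nat) : nat :=
  if (i == 0) || (j == 0) || (n <= i + j) then 0 else i + j.

Lemma Nmul_lt (n : nat) (i j : 'I_n.-1.+1) : Nmul_nat n.-1.+1 i j < n.-1.+1.
Proof.
rewrite /Nmul_nat; case: ifP => //; move/negbT; rewrite !negb_or -ltnNge.
by case/andP.
Qed.

Definition Nmul (n : nat) (i j : 'I_n.-1.+1) : 'I_n.-1.+1 := Ordinal (Nmul_lt i j).

Lemma NmulA (n : nat) : associative (@Nmul n).
Proof.
move=> [x hx] [y hy] [z hz]; apply: val_inj => /=.
rewrite /Nmul_nat.
by do !(case: ifP => /=); lia.
Qed.

Lemma N_nonempty (n : nat) : 0 < #|'I_n.-1.+1|.
Proof. by rewrite card_ord. Qed.

Definition Nsg (n : nat) : finSemigroup := FinSemigroup (@NmulA n) (N_nonempty n).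

Definition Sigma (n : nat) (I : identity) : Prop :=
  (* x y ~ y x *)
  I = ((0, [:: 1]), (1, [:: 0]))
  \/
  (* x^n ~ y_1 y_2 ... y_n *)
  I = ((0, nseq n.-1 0), (1, iota 2 n.-1))
  \/
  exists (es fs : seq nat),
    [/\ 1 <= size es /\ size fs = size es,
        all (fun e => 0 < e) es /\ all (fun f => 0 < f) fs,
        sumn es = sumn fs /\ sumn es < n,
        (forall k, k < size es ->
            nth 0 es k = nth 0 fs k \/
            (n <= sumn es + nth 0 es k /\ n <= sumn fs + nth 0 fs k))
      & I = (pow_word es, pow_word fs)].

Definition fclass := finSemigroup -> Prop.

Definition is_hom (S T : finSemigroup) (f : S -> T) : Prop :=
  forall x y, f (fsg_mul x y) = fsg_mul (f x) (f y).

Definition closed_sub (V : fclass) : Prop :=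
  forall (S T : finSemigroup) (f : T -> S), is_hom f -> injective f -> V S -> V T.

Definition closed_hom (V : fclass) : Prop :=
  forall (S T : finSemigroup) (f : S -> T), is_hom f -> (forall y, exists x, f x = y) ->
    V S -> V T.

Definition prod_mul (S T : finSemigroup) (x y : (S * T)%type) : (S * T)%type :=
  (fsg_mul x.1 y.1, fsg_mul x.2 y.2).

Lemma prod_mulA (S T : finSemigroup) : associative (@prod_mul S T).
Proof. by move=> [a b] [c d] [e f]; rewrite /prod_mul /= !fsg_mulA. Qed.

Lemma prod_nonempty (S T : finSemigroup) : 0 < #|{: S * T}|.
Proof. by rewrite card_prod muln_gt0 !fsg_nonempty. Qed.

Definition prod_sg (S T : finSemigroup) : finSemigroup :=
  FinSemigroup (@prod_mulA S T) (prod_nonempty S T).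

Definition unit_mul (x y : unit) : unit := tt.
Lemma unit_mulA : associative unit_mul. Proof. by []. Qed.
Lemma unit_nonempty : 0 < #|{: unit}|. Proof. by rewrite card_unit. Qed.
(** the trivial semigroup = the empty direct product *)
Definition trivial_sg : finSemigroup := FinSemigroup unit_mulA unit_nonempty.

Definition closed_prod (V : fclass) : Prop :=
  V trivial_sg /\ forall S T, V S -> V T -> V (prod_sg S T).

Definition pseudovariety (V : fclass) : Prop :=
  [/\ closed_sub V, closed_hom V & closed_prod V].

Definition generated (S : finSemigroup) : fclass :=
  fun T => forall V, pseudovariety V -> V S -> V T.

Definition subclass (U V : fclass) : Prop := forall S, U S -> V S.

Definition maximal_subpv (W V : fclass) : Prop :=
  [/\ pseudovariety W, subclass W V, ~ subclass V W &
      forall U, pseudovariety U -> subclass W U -> subclass U V ->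
        subclass U W \/ subclass V U].

Definition xn_xn1 (n : nat) : identity := ((0, nseq n.-1 0), (0, nseq n.-2 0)).

Definition Vsub (n : nat) : fclass :=
  fun T => generated (Nsg n) T /\ fsat T (xn_xn1 n).

(* Main.v *)
Require Import Defs.
From mathcomp Require Import all_boot zify.
Set Implicit Arguments. Unset Strict Implicit. Unset Printing Implicit Defensive.

Definition letters (w : word) : seq nat := w.1 :: w.2.

Section Comm.
Variable S : semigroup.
Hypothesis hC : commutative (@sg_mul S).
Local Notation oop := (oAC (@sg_mulA S) hC).

Lemma foldl_big (s : nat -> S) acc l :
  oop (Some acc) (\big[oop/None]_(i <- l) Some (s i)) =
  Some (foldl (fun a y => sg_mul a (s y)) acc l).
Proof.
elim: l acc => [|y l IH] acc /=; first by rewrite big_nil.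
by rewrite big_cons oopA_subdef oACE IH.
Qed.

Lemma eval_big (s : nat -> S) w : Some (eval_word s w) = \big[oop/None]_(i <- letters w) Some (s i).
Proof. by rewrite /letters big_cons foldl_big. Qed.

Lemma eval_perm (s : nat -> S) u v : perm_eq (letters u) (letters v) -> eval_word s u = eval_word s v.
Proof. by move=> h; apply: Some_inj; rewrite !eval_big; apply: perm_big. Qed.
End Comm.

Section NN.
Variable m : nat.
Local Notation N := (Nsg m.+1).

Definition nv (L : seq nat) := if (0 \in L) || (m.+1 <= sumn L) then 0 else sumn L.

Lemma Nfold (x : N) (s : nat -> N) l :
  val (foldl (fun acc y => fsg_mul acc (s y)) x l) = nv (val x :: map (fun y => val (s y)) l).
Proof.
rewrite /nv; elim: l x => [|y l IH] x /=.
  rewrite in_cons in_nil addn0 orbF; have /= := ltn_ord x; case: ifP => //; lia.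
rewrite IH /= !in_cons.
move: (0 \in _) (sumn _) (ltn_ord x) (ltn_ord (s y)) => h T /= hx hy.
rewrite /Nmul_nat; move: (val x) (val (s y)) => a b.
case: h; rewrite ?orbT ?orbF //=; do !case: ifP; lia.
Qed.

Lemma Neval (s : nat -> N) w :
  val (eval_word (S := sg_of_fsg N) s w) = nv (map (fun y => val (s y)) (letters w)).
Proof. exact: Nfold. Qed.
End NN.

Definition Le (es : seq nat) := flatten (mkseq (fun i => nseq (nth 0 es i) i) (size es)).

Lemma mem_Le es x : (x \in Le es) = (x < size es) && (0 < nth 0 es x).
Proof.
rewrite /Le /mkseq; apply/flatten_mapP/andP => [[i]|[h1 h2]].
  by rewrite mem_iota mem_nseq => /andP[_ hi] /andP[he /eqP->].
by exists x; rewrite ?mem_iota ?mem_nseq ?eqxx ?andbT.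
Qed.

Lemma sumn_iota (h : nat -> nat) k : sumn (map h (iota 0 k)) = \sum_(i < k) h i.
Proof. by rewrite sumnE big_map -(big_mkord xpredT h) /index_iota subn0. Qed.

Lemma sumn_Le es (g : nat -> nat) :
  sumn (map g (Le es)) = \sum_(i < size es) nth 0 es i * g i.
Proof.
rewrite /Le /mkseq map_flatten sumn_flatten -!map_comp.
rewrite (eq_map (g := fun i => nth 0 es i * g i)); first exact: sumn_iota.
by move=> i /=; rewrite map_nseq sumn_nseq mulnC.
Qed.

Lemma sumn_nth es : sumn es = \sum_(i < size es) nth 0 es i.
Proof. by rewrite -{1}(mkseq_nth 0 es) /mkseq sumn_iota. Qed.

Lemma key k N0 (e f g : nat -> nat) :
  (forall i : 'I_k, 0 < g i) ->
  \sum_(i < k) e i = \sum_(i < k) f i -> \sum_(i < k) e i < N0 ->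
  (forall i : 'I_k, e i = f i \/ (N0 <= \sum_(i < k) e i + e i /\ N0 <= \sum_(i < k) f i + f i)) ->
  (if N0 <= \sum_(i < k) e i * g i then 0 else \sum_(i < k) e i * g i) =
  (if N0 <= \sum_(i < k) f i * g i then 0 else \sum_(i < k) f i * g i).
Proof.
move=> hg hEF hE hb.
have sp : forall h : nat -> nat, \sum_(i < k) h i * g i =
   \sum_(i < k) h i + \sum_(i < k) h i * (g i - 1).
  move=> h; rewrite -big_split; apply: eq_bigr => i _.
  by rewrite -{1}(subnK (hg i)) mulnDr muln1 addnC.
case: (boolP [exists i : 'I_k, (e i != f i) && (1 < g i)]).
  case/existsP => j /andP [hne hgj].
  have [hej|[h1 h2]] := hb j; first by rewrite hej eqxx in hne.
  have ge : forall h : nat -> nat, h j <= \sum_(i < k) h i * (g i - 1).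
    move=> h; rewrite (bigD1 j) //=; apply: leq_trans (leq_addr _ _).
    by rewrite -{1}(muln1 (h j)) leq_mul2l; apply/orP; right; rewrite subn_gt0.
  rewrite !sp; have := ge e; have := ge f.
  case: ifP; case: ifP => //; lia.
rewrite negb_exists => /forallP hall.
have eqs : \sum_(i < k) e i * (g i - 1) = \sum_(i < k) f i * (g i - 1).
  apply: eq_bigr => i _; move: (hall i); rewrite negb_and negbK.
  case/orP => [/eqP -> //| h]; have -> : g i - 1 = 0 by lia.
  by rewrite !muln0.
by rewrite !sp eqs hEF.
Qed.

Section Sound.
Variable m : nat.
Hypothesis hm : 0 < m.
Local Notation N := (Nsg m.+1).

Lemma nv_perm L1 L2 : perm_eq L1 L2 -> nv m L1 = nv m L2.
Proof. by move=> h; rewrite /nv (perm_mem h) (perm_sumn h). Qed.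

Lemma size_sumn L : 0 \notin L -> size L <= sumn L.
Proof.
elim: L => //= a L IH; rewrite in_cons negb_or => /andP [ha hL].
have := IH hL; move: ha; rewrite eq_sym; lia.
Qed.

Lemma nv_big L : m.+1 <= size L -> nv m L = 0.
Proof.
rewrite /nv; case: (boolP (0 \in L)) => //= h hs.
by rewrite (leq_trans hs (size_sumn h)).
Qed.

Lemma letters_wos L : L != [::] -> letters (word_of_seq L) = L.
Proof. by case: L. Qed.

Lemma Le_mem es : all (fun e => 0 < e) es -> Le es =i iota 0 (size es).
Proof.
move=> /all_nthP hp x; rewrite mem_Le mem_iota /=.
by case: (ltnP x (size es)) => //= h; rewrite (hp 0).
Qed.

Lemma eval_pow (s : nat -> N) es : 1 <= size es -> all (fun e => 0 < e) es ->
  val (eval_word (S := sg_of_fsg N) s (pow_word es)) =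
  nv m (map (fun y => val (s y)) (Le es)).
Proof.
move=> h1 hp; rewrite Neval; change (pow_word es) with (word_of_seq (Le es)); rewrite letters_wos //.
apply/negP => /eqP h0; move: (Le_mem hp 0); rewrite h0 in_nil mem_iota /= h1 //.
Qed.

Lemma Nsound I : Sigma m.+1 I -> sat (sg_of_fsg N) I.
Proof.
case=> [->|[->|[es [fs [[h1 hs] [hpe hpf] [hEF hE] hb ->]]]]] s; apply: val_inj.
- rewrite !Neval; apply: nv_perm; by rewrite /letters /=; apply/permP => p /=; rewrite addnCA.
- by rewrite !Neval !nv_big //= size_map ?size_iota ?size_nseq.
rewrite !eval_pow ?hs //.
rewrite /nv !sumn_Le hs.
have hz : forall ls, size ls = size es -> all (fun e => 0 < e) ls ->
   (0 \in [seq val (s y) | y <- Le ls]) = (0 \in [seq val (s y) | y <- iota 0 (size es)]).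
  by move=> ls hl hp; rewrite -hl; apply: eq_mem_map; apply: Le_mem.
rewrite !hz //; case hz0: (0 \in _) => //=.
apply: (key (N0 := m.+1) (e := fun i => nth 0 es i) (f := fun i => nth 0 fs i) (g := fun i => val (s i))).
- move=> i; rewrite lt0n; apply/negP => /eqP hi.
  have h0 : 0 \in [seq val (s y) | y <- iota 0 (size es)].
    by apply/mapP; exists (val i); rewrite ?mem_iota ?add0n ?ltn_ord ?hi.
  by rewrite h0 in hz0.
- by have := sumn_nth fs; rewrite hs => <-; rewrite -sumn_nth.
- by rewrite -sumn_nth.
- by move=> i; have := sumn_nth fs; rewrite hs => <-; rewrite -sumn_nth; apply: hb.
Qed.
End Sound.

Lemma foldl_mapg (T : Type) (op : T -> T -> T) (g : nat -> T) acc (L : seq nat) :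
  foldl (fun a y => op a (g y)) acc L = foldl op acc (map g L).
Proof. by elim: L acc => //= y L IH acc; rewrite IH. Qed.

Section Zero.
Variable m : nat.
Variable S : semigroup.
Hypothesis h2 : sat S ((0, nseq m 0), (1, iota 2 m)).


Lemma pow_eq (t : nat -> S) c k : t 0 = c ->
  eval_word t (0, nseq k 0) = eval_word (fun _ => c) (0, nseq k 0).
Proof.
move=> h; rewrite /eval_word /= h.
by rewrite !foldl_mapg !map_nseq h.
Qed.

Lemma zero_eq (s : nat -> S) c w : m.+1 <= size (letters w) ->
  eval_word s w = eval_word (fun _ => c) (0, nseq m 0).
Proof.
case: w => a l /= hl; rewrite /eval_word /=.
rewrite -(cat_take_drop (size l - m) l) foldl_cat.
move: (foldl _ (s a) _) => x.
set l2 := drop _ l.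
have hs : size l2 = m by rewrite size_drop; lia.
pose t k := if k is k'.+2 then s (nth 0 l2 k') else if k == 0 then c else x.
have e := h2 t; rewrite /= (pow_eq (c := c)) // in e.
rewrite -[RHS]/(eval_word (fun _ => c) (0, nseq m 0)) e.
rewrite /eval_word /= foldl_mapg [RHS]foldl_mapg; congr foldl.
rewrite -(addn0 2) iotaDl -map_comp -{1}(mkseq_nth 0 l2) hs /mkseq -map_comp.
by apply: eq_map => i.
Qed.
End Zero.

Lemma sumn_ifx (x : nat) (L : seq nat) :
  sumn (map (fun y => if y == x then 2 else 1) L) = size L + count_mem x L.
Proof. elim: L => //= a L ->; case: (a == x) => /=; lia. Qed.

Lemma zero_ifx (x : nat) (L : seq nat) :
  (0 \in map (fun y => if y == x then 0 else 1) L) = (x \in L).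
Proof.
elim: L => //= a L IH; rewrite !in_cons IH.
by case: (eqVneq a x).
Qed.

Lemma zero_ifx2 (x : nat) (L : seq nat) : (0 \in map (fun y => if y == x then 2 else 1) L) = false.
Proof. by elim: L => //= a L IH; rewrite !in_cons IH; case: (a == x). Qed.

Lemma map_const1 (L : seq nat) : (map (fun _ => 1) L) = nseq (size L) 1.
Proof. by elim: L => //= a L ->. Qed.

Lemma map_ifx_notin (x : nat) (L : seq nat) : x \notin L ->
  map (fun y => if y == x then 0 else 1) L = map (fun _ => 1) L.
Proof.
move=> h; apply/eq_in_map => y hy; case: eqP => // e.
by rewrite -e hy in h.
Qed.

Lemma Le_map (xs : seq nat) (F : nat -> nat) :
  map (nth 0 xs) (Le (map F xs)) = flatten (map (fun x => nseq (F x) x) xs).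
Proof.
have -> : map (fun x => nseq (F x) x) xs =
   map (fun i => nseq (F (nth 0 xs i)) (nth 0 xs i)) (iota 0 (size xs)).
  by rewrite -{1}(mkseq_nth 0 xs) /mkseq -map_comp.
rewrite /Le size_map map_flatten /mkseq -map_comp; congr flatten.
apply/eq_in_map => i; rewrite mem_iota => /andP[_ hi] /=.
by rewrite map_nseq (nth_map 0).
Qed.

Lemma sumn_count (xs : seq nat) L :
  sumn (map (fun x => count_mem x L) xs) = size (flatten (map (fun x => nseq (count_mem x L) x) xs)).
Proof. by rewrite size_flatten /shape -map_comp; congr sumn; apply: eq_map => x /=; rewrite size_nseq. Qed.

Lemma eval_pow_comm (S : semigroup) (hC : commutative (@sg_mul S)) (s : nat -> S) u xs es :
  all (fun e => 0 < e) es -> 0 < size es -> perm_eq (letters u) (map (nth 0 xs) (Le es)) ->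
  eval_word s u = eval_word (fun i => s (nth 0 xs i)) (pow_word es).
Proof.
move=> hp h1 hperm; apply: Some_inj; rewrite !(eval_big hC).
change (pow_word es) with (word_of_seq (Le es)); rewrite letters_wos.
  by rewrite (perm_big _ hperm) big_map.
apply/negP => /eqP h0; move: (Le_mem hp 0); rewrite h0 in_nil mem_iota /= h1 //.
Qed.

Section Complete.
Variable m : nat.
Hypothesis hm : 0 < m.
Local Notation N := (Nsg m.+1).

Lemma Ncomplete u v : fsat N (u, v) -> consequence (Sigma m.+1) (u, v).
Proof.
move=> hN S hS s /=.
have hC : commutative (@sg_mul S).
  move=> x y; have := hS _ (or_introl erefl) (fun k => if k == 0 then x else y).
  by rewrite /eval_word /=.
have h2 : sat S ((0, nseq m 0), (1, iota 2 m)).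
  exact: (hS _ (or_intror (or_introl erefl))).
set Lu := letters u; set Lv := letters v.
pose a0 : N := ord0.
pose a1 : N := Ordinal (hm : 1 < m.+1).
have ev : forall (x : nat) (p q : N) w,
   val (eval_word (S := sg_of_fsg N) (fun y => if y == x then p else q) w) =
   nv m (map (fun y => if y == x then val p else val q) (letters w)).
  move=> x p q w; rewrite Neval; congr nv; apply: eq_map => y; by case: (y == x).
have hszu : 0 < size Lu by [].
have hszv : 0 < size Lv by [].
have hsz := congr1 val (hN (fun _ => a1)).
rewrite !Neval -/Lu -/Lv !map_const1 /nv !mem_nseq !sumn_nseq !mul1n !andbF !orFb in hsz.
have [[hu hv]|hsmall] : (m < size Lu /\ m < size Lv) \/ (size Lu = size Lv /\ size Lu <= m).
  move: hsz; case: (ltnP m (size Lu)) => h1; case: (ltnP m (size Lv)) => h1' hsz;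
   [by left | exfalso; lia | exfalso; lia | right; split; lia].
  by rewrite (zero_eq h2 s (s 0) hu) (zero_eq h2 s (s 0) hv).
case: hsmall => hsize hle.
have hsupp : forall x, (x \in Lu) = (x \in Lv).
  move=> x; have := congr1 val (hN (fun y => if y == x then a0 else a1)).
  rewrite /= !ev -/Lu -/Lv.
  case: (boolP (x \in Lu)) => xu; case: (boolP (x \in Lv)) => xv //.
  - rewrite [X in _ = nv m X]map_ifx_notin // map_const1 /nv zero_ifx xu orTb.
    rewrite mem_nseq andbF orFb sumn_nseq mul1n.
    case: ltnP => hh hh'; exfalso; lia.
  - rewrite [X in nv m X = _]map_ifx_notin // map_const1 /nv zero_ifx xv orTb.
    rewrite mem_nseq andbF orFb sumn_nseq mul1n.
    case: ltnP => hh hh'; exfalso; lia.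
have hcnt : forall x : nat, x \in Lu ->
   (size Lu + count_mem x Lu <= m \/ size Lv + count_mem x Lv <= m) ->
   count_mem x Lu = count_mem x Lv.
  move=> x xu hsm.
  have cu : 0 < count_mem x Lu by rewrite -has_count has_pred1.
  have cv : 0 < count_mem x Lv by rewrite -has_count has_pred1 -hsupp.
  have h2m : 2 < m.+1 by lia.
  pose a2 : N := Ordinal h2m.
  have ev2 : forall w, val (eval_word (S := sg_of_fsg N) (fun y => if y == x then a2 else a1) w) =
     nv m (map (fun y => if y == x then 2 else 1) (letters w)) := fun w => ev x a2 a1 w.
  have : val (eval_word (S := sg_of_fsg N) (fun y => if y == x then a2 else a1) u) =
         val (eval_word (S := sg_of_fsg N) (fun y => if y == x then a2 else a1) v)
    := congr1 val (hN (fun y => if y == x then a2 else a1)).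
  rewrite !ev2 -/Lu -/Lv /nv !zero_ifx2 !orFb !sumn_ifx.
  case: ltnP => ?; case: ltnP => ?; lia.
pose xs := undup Lu.
pose es := map (fun x => count_mem x Lu) xs.
pose fs := map (fun x => count_mem x Lv) xs.
have hpos : forall x, x \in xs -> 0 < count_mem x Lu /\ 0 < count_mem x Lv.
  move=> x; rewrite mem_undup => hx.
  by rewrite -!has_count !has_pred1 -hsupp hx.
have hes : all (fun e => 0 < e) es by apply/allP => e /mapP [x hx ->]; exact: (hpos x hx).1.
have hfs : all (fun e => 0 < e) fs by apply/allP => e /mapP [x hx ->]; exact: (hpos x hx).2.
have hxs : 0 < size xs.
  have hh : u.1 \in xs by rewrite mem_undup mem_head.
  by rewrite lt0n size_eq0; apply/eqP => e; rewrite e in hh.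
have pu : perm_eq Lu (map (nth 0 xs) (Le es)).
  by rewrite /es Le_map perm_sym; exact: perm_count_undup.
have pv : perm_eq Lv (map (nth 0 xs) (Le fs)).
  rewrite /fs Le_map perm_sym; apply: perm_trans (perm_count_undup Lv).
  by apply: perm_flatten; apply: perm_map; apply: perm_undup => y; rewrite hsupp.
have sume : sumn es = size Lu by rewrite (perm_size pu) /es Le_map sumn_count.
have sumf : sumn fs = size Lv by rewrite (perm_size pv) /fs Le_map sumn_count.
have hsig : Sigma m.+1 (pow_word es, pow_word fs).
  right; right; exists es, fs; split => //.
  - by rewrite !size_map.
  - by rewrite sume sumf hsize; split => //; rewrite -hsize ltnS.
  move=> k; rewrite size_map => hk; rewrite !(nth_map 0) // sume sumf.
  have hx : nth 0 xs k \in Lu by rewrite -mem_undup mem_nth.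
  case: (leqP (size Lu + count_mem (nth 0 xs k) Lu) m) => h.
    by left; apply: hcnt => //; left.
  case: (leqP (size Lv + count_mem (nth 0 xs k) Lv) m) => h'.
    by left; apply: hcnt => //; right.
  by right.
have e := hS _ hsig (fun i => s (nth 0 xs i)).
rewrite (eval_pow_comm hC s hes _ pu) ?size_map //.
rewrite (eval_pow_comm hC s hfs _ pv) ?size_map //.
Qed.
End Complete.

Definition Vid (I : identity) : fclass := fun T => fsat T I.

Lemma eq_eval (S : semigroup) (s1 s2 : nat -> S) w : s1 =1 s2 -> eval_word s1 w = eval_word s2 w.
Proof.
move=> h; rewrite /eval_word h; elim: w.2 (s2 w.1) => //= y l IH acc.
by rewrite h IH.
Qed.

Lemma hom_eval (S T : finSemigroup) (f : S -> T) : is_hom f ->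
  forall (s : nat -> S) w, f (eval_word (S := sg_of_fsg S) s w) = eval_word (S := sg_of_fsg T) (fun k => f (s k)) w.
Proof.
move=> hf s w; rewrite /eval_word; elim: w.2 (s w.1) => //= y l IH acc.
by rewrite IH /= hf.
Qed.

Lemma prod_eval (S T : finSemigroup) (s : nat -> prod_sg S T) w :
  eval_word (S := sg_of_fsg (prod_sg S T)) s w =
  (eval_word (S := sg_of_fsg S) (fun k => (s k).1) w, eval_word (S := sg_of_fsg T) (fun k => (s k).2) w).
Proof.
rewrite /eval_word; elim: w.2 (s w.1) => [[a b]|y l IH acc] //=.
Qed.

Lemma Vid_pv I : pseudovariety (Vid I).
Proof.
split.
- move=> S T f hf fi hS s; apply: fi; rewrite !hom_eval //; exact: hS.
- move=> S T f hf hsurj hS s.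
  have [x0 _] := hsurj (s 0).
  pose g y := odflt x0 [pick x | f x == y].
  have hg : forall y, f (g y) = y.
    move=> y; rewrite /g; case: pickP => [x /eqP //| h].
    by have [x hx] := hsurj y; have := h x; rewrite hx eqxx.
  have e := hS (fun k => g (s k)).
  have := congr1 f e; rewrite !hom_eval //.
  by rewrite !(eq_eval (s2 := s) _ (fun k => hg (s k))).
- split.
  + by move=> s; case: (eval_word _ _); case: (eval_word _ _).
  + move=> S T hS hT s; rewrite !prod_eval.
    by rewrite (hS (fun k => (s k).1)) (hT (fun k => (s k).2)).
Qed.

Lemma generated_pv S : pseudovariety (generated S).
Proof.
split.
- move=> A B f hf fi hA V hV hVS; have [hsub _ _] := hV; exact: hsub _ _ f hf fi (hA V hV hVS).
- move=> A B f hf fs hA V hV hVS; have [_ hhom _] := hV; exact: hhom _ _ f hf fs (hA V hV hVS).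
- split.
  + by move=> V [_ _ [h _]] _.
  + by move=> A B hA hB V hV hVS; have [_ _ [_ hp]] := hV; apply: hp; [exact: hA | exact: hB].
Qed.

Lemma inter_pv (U V : fclass) : pseudovariety U -> pseudovariety V ->
  pseudovariety (fun T => U T /\ V T).
Proof.
move=> [u1 u2 [u3 u4]] [v1 v2 [v3 v4]]; split.
- by move=> S T f hf fi [hU hV]; split; [exact: u1 hf fi hU | exact: v1 hf fi hV].
- by move=> S T f hf fs [hU hV]; split; [exact: u2 hf fs hU | exact: v2 hf fs hV].
- split => //; by move=> S T [a b] [c d]; split; [exact: u4 | exact: v4].
Qed.

Lemma gen_sat S I : fsat S I -> forall T, generated S T -> fsat T I.
Proof. by move=> h T hT; exact: (hT (Vid I) (Vid_pv I) h). Qed.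

Lemma gen_self S : generated S S.
Proof. by move=> V _ h. Qed.

Lemma foldl_nseq_iter (T : Type) (g : T -> T) x k (y : nat) :
  foldl (fun acc _ => g acc) x (nseq k y) = iter k g x.
Proof. by elim: k x => //= k IH x; rewrite IH -iterSr. Qed.

Lemma foldl_nseq_op (T : Type) (op : T -> T -> T) x k y :
  foldl op x (nseq k y) = iter k (fun a => op a y) x.
Proof. by elim: k x => //= k IH x; rewrite IH -iterSr. Qed.

Lemma map_constT (T : Type) (c : T) (l : seq nat) : map (fun _ => c) l = nseq (size l) c.
Proof. by elim: l => //= a l ->. Qed.

Section Embed.
Variable m : nat.
Hypothesis hm : 0 < m.
Variable T : finSemigroup.
Hypothesis h2 : fsat T ((0, nseq m 0), (1, iota 2 m)).
Variable t : T.
Local Notation mul := (@fsg_mul T).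
Definition Q k := iter k (fun x => mul x t) t.

Lemma evalQ (s : nat -> T) k : s 0 = t -> eval_word (S := sg_of_fsg T) s (0, nseq k 0) = Q k.
Proof.
move=> h; rewrite /eval_word /= foldl_mapg map_nseq h.
exact: foldl_nseq_op.
Qed.

Lemma QM a b : mul (Q a) (Q b) = Q (a + b + 1).
Proof.
elim: b => [|b IH]; first by rewrite addn0 addn1.
rewrite /Q iterS -/(Q b) fsg_mulA IH.
have -> : a + b.+1 + 1 = (a + b + 1).+1 by lia.
by rewrite iterS.
Qed.

Lemma Qm1 : Q m.+1 = Q m.
Proof.
pose sg k := if k == 1 then Q 1 else t.
have e := h2 sg; rewrite /= evalQ // in e.
rewrite e /eval_word /= foldl_mapg.
have -> : map sg (iota 2 m) = nseq m t.
  rewrite (_ : nseq m t = map (fun _ => t) (iota 2 m)); last by rewrite map_constT size_iota.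
  apply/eq_in_map => y.
  by rewrite mem_iota /sg; case: eqP => // ->.
rewrite foldl_nseq_op /sg /= /Q.
by rewrite (_ : mul t t = (fun x => mul x t) t) // -iterSr iterS.
Qed.

Lemma Qbig k : m <= k -> Q k = Q m.
Proof.
move=> /subnK <-; elim: (k - m) => // j IH.
rewrite addSn /Q iterS -/(Q (j + m)) IH.
by rewrite -[mul (Q m) t]/(Q m.+1) Qm1.
Qed.

Hypothesis hnt : Q m != Q m.-1.

Lemma Qinj a b : a <= m -> b <= m -> Q a = Q b -> a = b.
Proof.
wlog hab : a b / a <= b.
  move=> H ha hb e; case: (leqP a b) => h; first exact: H.
  exact: esym (H b a (ltnW h) hb ha (esym e)).
move=> ha hb e; case: (ltngtP a b) hab => // hlt _.
exfalso; move/negP: hnt; apply; apply/eqP.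
case: (eqVneq a m.-1) => [ea|na].
  by rewrite -ea e Qbig //; lia.
have -> : m.-1 = a + (m - 2 - a) + 1 by lia.
rewrite -QM e QM Qbig //; lia.
Qed.

Definition ex (i : nat) := if i == 0 then m else i.-1.

Lemma ex_arith i j : i < m.+1 -> j < m.+1 ->
  minn (ex (Nmul_nat m.+1 i j)) m = minn (ex i + ex j + 1) m.
Proof. move=> hi hj; rewrite /ex /Nmul_nat; do !case: ifP; lia. Qed.

Definition femb (i : Nsg m.+1) : T := Q (ex i).

Lemma Qmin k : Q k = Q (minn k m).
Proof. by case: (leqP m k) => h //; rewrite Qbig. Qed.

Lemma femb_hom : is_hom femb.
Proof.
move=> i j; rewrite /femb QM Qmin [RHS]Qmin; congr Q.
exact: ex_arith (ltn_ord i) (ltn_ord j).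
Qed.

Lemma femb_inj : injective femb.
Proof.
move=> [i hi] [j hj]; rewrite /femb /= => /Qinj e; apply: ord_inj => /=.
move: hi hj => /= hi hj.
have exle : forall k : nat, k < m.+1 -> ex k <= m by move=> k hk; rewrite /ex; case: ifP; lia.
have := e (exle _ hi) (exle _ hj); rewrite /ex; do !case: ifP; lia.
Qed.
End Embed.

From Stdlib Require Import Classical.

Lemma key_embed m (hm : 0 < m) (U : fclass) (hU : pseudovariety U) (T : finSemigroup) :
  U T -> fsat T ((0, nseq m 0), (1, iota 2 m)) -> ~ fsat T (xn_xn1 m.+1) -> U (Nsg m.+1).
Proof.
move=> hT h2 hn.
have [s hs] : exists s : nat -> T,
    eval_word (S := sg_of_fsg T) s (0, nseq m 0) <> eval_word (S := sg_of_fsg T) s (0, nseq m.-1 0).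
  apply: NNPP => H; apply: hn => s; apply: NNPP => H'; apply: H; by exists s.
rewrite !(evalQ (t := s 0)) // in hs.
have hnt : Q (s 0) m != Q (s 0) m.-1 by apply/eqP.
have [hsub _ _] := hU.
exact: (hsub T (Nsg m.+1) _ (femb_hom hm h2 hnt) (femb_inj hm h2 hnt) hT).
Qed.

Theorem proposition5p8 (n : nat) (hn : 2 <= n) :
  (forall I : identity, fsat (Nsg n) I <-> consequence (Sigma n) I)
  /\
  (maximal_subpv (Vsub n) (generated (Nsg n)) /\
   forall W : fclass, maximal_subpv W (generated (Nsg n)) ->
     subclass W (Vsub n) /\ subclass (Vsub n) W).
Proof.
case: n hn => [|m] // hn; have hm : 0 < m by [].
split.
  move=> [u v]; split; first exact: Ncomplete.
  by move=> hc; exact: (hc (sg_of_fsg (Nsg m.+1)) (fun J hJ => Nsound hm hJ)).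
set G := generated (Nsg m.+1).
have Gpv : pseudovariety G := generated_pv (Nsg m.+1).
have Vpv : pseudovariety (Vsub m.+1) := inter_pv Gpv (Vid_pv (xn_xn1 m.+1)).
pose a1 : Nsg m.+1 := Ordinal (hm : 1 < m.+1).
have notN : ~ fsat (Nsg m.+1) (xn_xn1 m.+1).
  move=> h; have := congr1 val (h (fun _ => a1)).
  rewrite !Neval /nv /= !map_const1 !size_nseq !in_cons !mem_nseq !sumn_nseq /=.
  case: ifP => h1; case: ifP => h2; lia.
have GN : G (Nsg m.+1) := @gen_self (Nsg m.+1).
have h2G : forall T, G T -> fsat T ((0, nseq m 0), (1, iota 2 m)).
  move=> T hT; apply: gen_sat hT; exact: (Nsound hm (or_intror (or_introl erefl))).
have Key : forall U, pseudovariety U -> forall T, U T -> G T -> ~ fsat T (xn_xn1 m.+1) -> subclass G U.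
  move=> U hU T hT hG hn' S hS.
  exact: (hS U hU (key_embed hm hU hT (h2G T hG) hn')).
have maxV : maximal_subpv (Vsub m.+1) G.
  split => //.
  - by move=> T [].
  - by move=> h; have [_ ] := h _ GN.
  - move=> U hU hVU hUG.
    case: (classic (exists T, U T /\ ~ fsat T (xn_xn1 m.+1))) => [[T [hT hnT]]|hno].
      by right; exact: (Key U hU T hT (hUG T hT) hnT).
    left => T hT; split; first exact: hUG.
    by apply: NNPP => hn'; apply: hno; exists T.
split => //.
move=> W [hW hWG hnot hmax].
have WV : subclass W (Vsub m.+1).
  move=> T hT; split; first exact: hWG.
  apply: NNPP => hn'; apply: hnot; exact: (Key W hW T hT (hWG T hT) hn').
split => //.
case: (hmax _ Vpv WV (fun T hT => hT.1)) => // hGV.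
by exfalso; have [_] := hGV _ GN.
Qed.
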